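(* Let $\omega$ be a good weight function satisfying $\omega(t)=o(t)$ as $t\to\infty$, with associated weight matrix $\{W^x\}_{x>0}$. Then for every $x>0$ there exist $y_3\ge y_2\ge y_1\ge x$ and $D\ge1$ such that for all $t>0$ $$\overline{\Gamma}_{w^{y_3}}(D^3t)\le\underline{\Gamma}_{w^{y_2}}(D^2t)\le\overline{\Gamma}_{w^{y_2}}(D^2t)\le\underline{\Gamma}_{w^{y_1}}(Dt)\le\frac{\underline{\Gamma}_{w^x}(t)}{2}.$$ Moreover one may choose $y_1\ge2x$ and $y_2\ge2y_1$, so that $w^x_{j+k}\le w^{y_1}_jw^{y_1}_k$ and $w^{y_1}_{j+k}\le w^{y_2}_jw^{y_2}_k$ for all $j,k\in\mathbb{N}$.
   Context: A weight function is a continuous increasing $\omega:[0,\infty)\to[0,\infty)$ with $\omega(0)=0$, $\omega(t)\to\infty$, $\omega(2t)=O(\omega(t))$, $\omega(t)=O(t)$, $\log t=o(\omega(t))$, and $\varphi(t)=\omega(e^t)$ convex; normalized so that $\omega|_{[0,1]}=0$, $\varphi^*(t)=\sup_{s\ge0}(st-\varphi(s))$. Its weight matrix is $W^x_k=\exp(\frac1x\varphi^*(xk))$, $x>0$, and $\vartheta^x_k=W^x_k/W^x_{k-1}$, $w^x_k=W^x_k/k!$. $\omega$ is good if $\forall x>0\ \exists y>0\ \exists C\ge1\ \forall 1\le j\le k:\ \vartheta^x_j/j\le C\vartheta^y_k/k$. For a positive sequence $m$ with $m_0=1$, $m_k^{1/k}\to\infty$, $m_{k+1}/m_k\to\infty$: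 $h_m(t)=\inf_k m_kt^k$, $\overline{\Gamma}_m(t)=\min\{k:h_m(t)=m_kt^k\}$, $\underline{\Gamma}_m(t)=\min\{k:m_{k+1}/m_k\ge1/t\}$ for $t>0$. *)

(* Defs.v *)
From Stdlib Require Import Reals Arith ClassicalEpsilon.
Open Scope R_scope.

(** Weight functions  omega : [0,oo) -> [0,oo), represented as R -> R
    (values on negative arguments are irrelevant). *)

Definition phi (omega : R -> R) (t : R) : R := omega (exp t).

Definition is_weight_function (omega : R -> R) : Prop :=
  (forall t, 0 <= t -> forall eps, 0 < eps -> exists delta, 0 < delta /\
       forall s, 0 <= s -> Rabs (s - t) < delta -> Rabs (omega s - omega t) < eps) /\
  (forall s t, 0 <= s -> s <= t -> omega s <= omega t) /\
  (forall t, 0 <= t -> 0 <= omega t) /\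
  omega 0 = 0 /\
  (forall M, exists T, forall t, T <= t -> M <= omega t) /\
  (exists C T, 0 < C /\ forall t, T <= t -> omega (2 * t) <= C * omega t) /\
  (exists C T, 0 < C /\ forall t, T <= t -> omega t <= C * t) /\
  (forall eps, 0 < eps -> exists T, forall t, T <= t -> ln t <= eps * omega t) /\
  (forall a b l, 0 <= l <= 1 ->
     phi omega (l * a + (1 - l) * b) <= l * phi omega a + (1 - l) * phi omega b) /\
  (forall t, 0 <= t <= 1 -> omega t = 0).

(** Young conjugate  phi*(t) = sup_{s >= 0} (s t - phi(s))
    (the least upper bound, chosen by classical description; it exists for
    weight functions and nonnegative t). *)
Definition phi_star (omega : R -> R) (t : R) : R :=
  epsilon (inhabits 0)
    (fun L => is_lub (fun v => exists s, 0 <= s /\ v = s * t - phi omega s) L).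

Definition W (omega : R -> R) (x : R) (k : nat) : R :=
  exp (/ x * phi_star omega (x * INR k)).

Definition theta (omega : R -> R) (x : R) (k : nat) : R :=
  W omega x k / W omega x (k - 1).

Definition wseq (omega : R -> R) (x : R) (k : nat) : R :=
  W omega x k / INR (Factorial.fact k).

Definition is_good (omega : R -> R) : Prop :=
  forall x, 0 < x -> exists y, 0 < y /\ exists C, 1 <= C /\
    forall j k : nat, (1 <= j)%nat -> (j <= k)%nat ->
      theta omega x j / INR j <= C * (theta omega y k / INR k).

Definition is_glb (E : R -> Prop) (l : R) : Prop :=
  (forall v, E v -> l <= v) /\ (forall b, (forall v, E v -> b <= v) -> b <= l).

Definition h_fun (m : nat -> R) (t : R) : R :=
  epsilon (inhabits 0) (is_glb (fun v => exists k, v = m k * t ^ k)).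

Definition Gamma_bar (m : nat -> R) (t : R) : nat :=
  epsilon (inhabits 0%nat)
    (fun n => h_fun m t = m n * t ^ n /\
              forall k, h_fun m t = m k * t ^ k -> (n <= k)%nat).

Definition Gamma_under (m : nat -> R) (t : R) : nat :=
  epsilon (inhabits 0%nat)
    (fun n => m (S n) / m n >= / t /\
              forall k, m (S k) / m k >= / t -> (n <= k)%nat).

(* Main.v *)
Require Import Defs.
From Stdlib Require Import Reals Lra Lia Psatz ClassicalEpsilon Classical Arith ZArith.
Open Scope R_scope.

Lemma exp_le_mono x y : x <= y -> exp x <= exp y.
Proof. intros H; destruct (Rle_lt_or_eq_dec _ _ H) as [H1|H1].
  left; now apply exp_increasing. subst; lra. Qed.

Lemma phi_nonneg omega : is_weight_function omega -> forall s, 0 <= phi omega s.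
Proof. intros Hw s. destruct Hw as (_&_&Hp&_). unfold phi. apply Hp.
  left; apply exp_pos. Qed.

Lemma phi_zero omega : is_weight_function omega -> phi omega 0 = 0.
Proof. intros Hw. destruct Hw as (_&_&_&_&_&_&_&_&_&Hn). unfold phi.
  rewrite exp_0. apply Hn. lra. Qed.

Lemma div_nonneg a b : 0 <= a -> 0 < b -> 0 <= a / b.
Proof. intros; unfold Rdiv; apply Rmult_le_pos; [lra| left; apply Rinv_0_lt_compat; lra]. Qed.

Definition SE omega t := fun v => exists s, 0 <= s /\ v = s * t - phi omega s.

Lemma SE_bound omega : is_weight_function omega -> forall t, 0 <= t -> bound (SE omega t).
Proof.
  intros Hw t Ht. pose proof (phi_nonneg omega Hw) as Hpn.
  destruct Hw as (_&_&_&_&_&_&_&Hln&_).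
  destruct (Hln (/ (t + 1))) as [T HT].
  { apply Rinv_0_lt_compat; lra. }
  exists (Rmax 0 (T * t)). intros v [s [Hs ->]].
  destruct (Rle_lt_dec T (exp s)) as [H1|H1].
  - specialize (HT _ H1). rewrite ln_exp in HT.
    assert (phi omega s >= (t+1) * s).
    { unfold phi. apply Rle_ge.
      apply Rmult_le_reg_l with (/ (t+1)). apply Rinv_0_lt_compat; lra.
      rewrite <- Rmult_assoc, Rinv_l by lra. lra. }
    apply Rle_trans with 0. nra. apply Rmax_l.
  - apply Rle_trans with (T * t). 2: apply Rmax_r.
    pose proof (exp_ineq1_le s). pose proof (Hpn s). nra.
Qed.

Lemma P_lub omega : is_weight_function omega -> forall t, 0 <= t ->
  is_lub (SE omega t) (phi_star omega t).
Proof.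
  intros Hw t Ht. unfold phi_star.
  apply epsilon_spec.
  destruct (completeness (SE omega t)) as [m Hm].
  - now apply SE_bound.
  - exists (0 * t - phi omega 0). exists 0. split; lra.
  - now exists m.
Qed.

Lemma P_ge omega : is_weight_function omega -> forall t s, 0 <= t -> 0 <= s ->
  s * t - phi omega s <= phi_star omega t.
Proof. intros Hw t s Ht Hs. apply (proj1 (P_lub omega Hw t Ht)). exists s; split; auto. Qed.

Lemma P_le omega : is_weight_function omega -> forall t b, 0 <= t ->
  (forall s, 0 <= s -> s * t - phi omega s <= b) -> phi_star omega t <= b.
Proof. intros Hw t b Ht H. apply (proj2 (P_lub omega Hw t Ht)).
  intros v [s [Hs ->]]. auto. Qed.

Lemma P0 omega : is_weight_function omega -> phi_star omega 0 = 0.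
Proof. intros Hw. apply Rle_antisym.
  - apply P_le; auto. lra. intros s Hs. pose proof (phi_nonneg omega Hw s). lra.
  - pose proof (P_ge omega Hw 0 0). rewrite phi_zero in H by auto. lra. Qed.

Lemma P_convex omega : is_weight_function omega -> forall a b l, 0 <= a -> 0 <= b ->
  0 <= l <= 1 ->
  phi_star omega (l * a + (1 - l) * b) <= l * phi_star omega a + (1 - l) * phi_star omega b.
Proof.
  intros Hw a b l Ha Hb Hl. apply P_le; auto. nra.
  intros s Hs. pose proof (P_ge omega Hw a s Ha Hs). pose proof (P_ge omega Hw b s Hb Hs).
  nra.
Qed.

Lemma slope1 omega : is_weight_function omega -> forall a b d, 0 <= a -> a < b -> b <= d ->
  (phi_star omega b - phi_star omega a) / (b - a) <= (phi_star omega d - phi_star omega a) / (d - a).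
Proof.
  intros Hw a b d Ha Hab Hbd.
  pose proof (P_convex omega Hw a d ((d - b)/(d - a))) as H.
  replace ((d - b) / (d - a) * a + (1 - (d - b) / (d - a)) * d) with b in H by (field; lra).
  assert (0 <= (d - b)/(d-a) <= 1).
  { split. apply div_nonneg; lra. apply Rmult_le_reg_r with (d - a). lra.
    unfold Rdiv. rewrite Rmult_assoc, Rinv_l by lra. lra. }
  specialize (H Ha ltac:(lra) H0).
  apply Rmult_le_reg_r with (b - a). lra.
  unfold Rdiv at 1. rewrite Rmult_assoc, Rinv_l by lra. rewrite Rmult_1_r.
  replace (1 - (d - b) / (d - a)) with ((b - a)/(d-a)) in H by (field; lra).
  replace ((phi_star omega d - phi_star omega a) / (d - a) * (b - a)) with
    ((b - a)/(d - a) * phi_star omega d - (b-a)/(d-a) * phi_star omega a) by (field; lra).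
  replace ((d - b) / (d - a)) with (1 - (b-a)/(d-a)) in H by (field; lra). lra.
Qed.

Lemma slope2 omega : is_weight_function omega -> forall a c d, 0 <= a -> a <= c -> c < d ->
  (phi_star omega d - phi_star omega a) / (d - a) <= (phi_star omega d - phi_star omega c) / (d - c).
Proof.
  intros Hw a c d Ha Hac Hcd.
  pose proof (P_convex omega Hw a d ((d - c)/(d - a))) as H.
  replace ((d - c) / (d - a) * a + (1 - (d - c) / (d - a)) * d) with c in H by (field; lra).
  assert (0 <= (d - c)/(d-a) <= 1).
  { split. apply div_nonneg; lra. apply Rmult_le_reg_r with (d - a). lra.
    unfold Rdiv. rewrite Rmult_assoc, Rinv_l by lra. lra. }
  specialize (H Ha ltac:(lra) H0).
  apply Rmult_le_reg_r with (d - c). lra.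
  unfold Rdiv at 2. rewrite Rmult_assoc, Rinv_l by lra. rewrite Rmult_1_r.
  replace ((phi_star omega d - phi_star omega a) / (d - a) * (d - c)) with
    ((d - c)/(d - a) * phi_star omega d - (d-c)/(d-a) * phi_star omega a) by (field; lra).
  replace (1 - (d - c) / (d - a)) with (1 - (d-c)/(d-a)) in H by (field; lra). lra.
Qed.

Lemma slope_mono omega : is_weight_function omega -> forall a b c d, 0 <= a -> a < b ->
  c < d -> a <= c -> b <= d ->
  (phi_star omega b - phi_star omega a) / (b - a) <= (phi_star omega d - phi_star omega c) / (d - c).
Proof.
  intros Hw a b c d Ha Hab Hcd Hac Hbd.
  apply Rle_trans with ((phi_star omega d - phi_star omega a) / (d - a)).
  - apply slope1; auto; lra.
  - apply slope2; auto; lra.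
Qed.

Lemma nat_large r : exists n : nat, r <= INR n.
Proof.
  destruct (archimed (Rabs r)) as [H1 _].
  assert (Hp : (0 < up (Rabs r))%Z).
  { apply lt_0_IZR. pose proof (Rabs_pos r). lra. }
  exists (Z.to_nat (up (Rabs r))). rewrite INR_IZR_INZ, Z2Nat.id by lia.
  pose proof (Rle_abs r). lra.
Qed.

Lemma INR_ge1 k : (1 <= k)%nat -> 1 <= INR k.
Proof. intros H. apply le_INR in H. simpl in H. lra. Qed.

Lemma W_pos omega y k : 0 < W omega y k.
Proof. unfold W. apply exp_pos. Qed.

Lemma theta_eq omega y k : 0 < y -> (1 <= k)%nat ->
  theta omega y k = exp ((phi_star omega (y * INR k) - phi_star omega (y * INR k - y)) / y).
Proof.
  intros Hy Hk. unfold theta, W. rewrite minus_INR by auto. simpl (INR 1).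
  replace (y * (INR k - 1)) with (y * INR k - y) by ring.
  replace (/ y * phi_star omega (y * INR k)) with
    ((phi_star omega (y * INR k) - phi_star omega (y * INR k - y)) / y
     + / y * phi_star omega (y * INR k - y)) by (field; lra).
  rewrite exp_plus. field. apply Rgt_not_eq, exp_pos.
Qed.

Lemma theta_pos omega y k : 0 < theta omega y k.
Proof. unfold theta. apply Rdiv_lt_0_compat; apply W_pos. Qed.

Lemma theta_mono omega : is_weight_function omega -> forall a b i j, 0 < a -> 0 < b ->
  (1 <= i)%nat -> (1 <= j)%nat -> a * (INR i - 1) <= b * (INR j - 1) ->
  a * INR i <= b * INR j -> theta omega a i <= theta omega b j.
Proof.
  intros Hw a b i j Ha Hb Hi Hj H1 H2.
  rewrite !theta_eq by auto. apply exp_le_mono.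
  pose proof (INR_ge1 _ Hi). pose proof (INR_ge1 _ Hj).
  pose proof (slope_mono omega Hw (a * INR i - a) (a * INR i) (b * INR j - b) (b * INR j))
    as Hs.
  replace (a * INR i - (a * INR i - a)) with a in Hs by ring.
  replace (b * INR j - (b * INR j - b)) with b in Hs by ring.
  apply Hs; nra.
Qed.

Lemma wseq_pos omega y k : 0 < wseq omega y k.
Proof. unfold wseq. apply Rdiv_lt_0_compat. apply W_pos. apply INR_fact_lt_0. Qed.

Lemma wseq_ratio omega y k :
  wseq omega y (S k) / wseq omega y k = theta omega y (S k) / INR (S k).
Proof.
  unfold wseq, theta. replace (S k - 1)%nat with k by lia.
  change (Factorial.fact (S k)) with (S k * Factorial.fact k)%nat.
  rewrite mult_INR. pose proof (W_pos omega y k). pose proof (W_pos omega y (S k)).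
  pose proof (INR_fact_lt_0 k). pose proof (lt_0_INR (S k) ltac:(lia)).
  field. repeat split; lra.
Qed.

Lemma unbounded omega : is_weight_function omega ->
  (forall eps, 0 < eps -> exists T, forall t, T <= t -> omega t <= eps * t) ->
  forall x M, 0 < x -> 0 < M -> exists k, (1 <= k)%nat /\ M <= theta omega x k / INR k.
Proof.
  intros Hw Hl x M Hx HM.
  pose proof (exp_pos 1) as He.
  destruct (Hl (x / (exp 1 * M))) as [T HT].
  { apply Rdiv_lt_0_compat; nra. }
  destruct (nat_large (Rmax T 1 / (exp 1 * M) + 1)) as [n Hn].
  set (k := S n).
  assert (Hk1 : (1 <= k)%nat) by (unfold k; lia).
  assert (HkR : INR k = INR n + 1) by (unfold k; apply S_INR).
  pose proof (pos_INR n).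
  assert (Hbig : Rmax T 1 <= exp 1 * M * INR k).
  { assert (Rmax T 1 / (exp 1 * M) <= INR k) by lra.
    apply Rmult_le_compat_l with (r := exp 1 * M) in H0; [|nra].
    replace (exp 1 * M * (Rmax T 1 / (exp 1 * M))) with (Rmax T 1) in H0 by (field; lra).
    lra. }
  pose proof (Rmax_l T 1). pose proof (Rmax_r T 1).
  set (u := exp 1 * M * INR k).
  assert (Hu : 0 < u) by (unfold u; lra).
  assert (Hu1 : 1 <= u) by (unfold u; lra).
  set (s := ln u).
  assert (Hes : exp s = u) by (unfold s; apply exp_ln; auto).
  assert (Hs : 0 <= s).
  { destruct (Rle_lt_dec 0 s); auto. apply exp_increasing in r. rewrite exp_0 in r. lra. }
  assert (Hphi : phi omega s <= x * INR k).
  { unfold phi. rewrite Hes. eapply Rle_trans. apply HT. unfold u; lra.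
    unfold u. right. field. lra. }
  exists k. split; auto.
  pose proof (INR_ge1 _ Hk1) as Hk.
  assert (Hxk : 0 < x * INR k) by nra.
  assert (HP : s * (x * INR k) - phi omega s <= phi_star omega (x * INR k)).
  { apply P_ge; auto; lra. }
  assert (Hsl : (phi_star omega (x * INR k) - phi_star omega 0) / (x * INR k - 0) <=
     (phi_star omega (x * INR k) - phi_star omega (x * INR k - x)) / (x * INR k - (x * INR k - x))).
  { apply slope2; auto; nra. }
  rewrite P0 in Hsl by auto.
  replace (x * INR k - (x * INR k - x)) with x in Hsl by ring.
  rewrite theta_eq by auto.
  assert (s - 1 <= (phi_star omega (x * INR k) - 0) / (x * INR k - 0)).
  { rewrite Rminus_0_r, Rminus_0_r. apply Rmult_le_reg_r with (x * INR k); auto.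
    unfold Rdiv. rewrite Rmult_assoc, Rinv_l by lra. nra. }
  assert (exp (s - 1) <= exp ((phi_star omega (x * INR k) - phi_star omega (x * INR k - x)) / x)).
  { apply exp_le_mono. lra. }
  replace (exp (s - 1)) with (M * INR k) in H3.
  2:{ replace s with ((s - 1) + 1) in Hes by ring. rewrite exp_plus in Hes.
      unfold u in Hes. apply Rmult_eq_reg_r with (exp 1); lra. }
  apply Rmult_le_reg_r with (INR k). lra.
  unfold Rdiv. rewrite Rmult_assoc, Rinv_l by lra. lra.
Qed.

Lemma least_ex (P : nat -> Prop) : (exists n, P n) -> exists n, P n /\ forall k, P k -> (n <= k)%nat.
Proof.
  intros [n Hn]. revert Hn. induction n as [n IH] using (well_founded_induction lt_wf).
  intros Hn. destruct (classic (exists k, (k < n)%nat /\ P k)) as [[k [Hk Pk]]|Hno].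
  - exact (IH k Hk Pk).
  - exists n; split; auto. intros k Pk. destruct (le_lt_dec n k); auto.
    exfalso; apply Hno; eauto.
Qed.

Definition GUspec (m : nat -> R) t n :=
  m (S n) / m n >= / t /\ forall k, m (S k) / m k >= / t -> (n <= k)%nat.

Lemma GU_spec m t : (exists k, m (S k) / m k >= / t) -> GUspec m t (Gamma_under m t).
Proof. intros H. unfold Gamma_under. apply epsilon_spec. now apply least_ex. Qed.

Lemma ratio_step (m : nat -> R) t k : (forall k, 0 < m k) -> 0 < t ->
  m (S k) / m k >= / t -> m k * t ^ k <= m (S k) * t ^ (S k).
Proof.
  intros Hm Ht H. pose proof (Hm k). pose proof (Hm (S k)).
  pose proof (pow_lt t k Ht).
  assert (1 <= m (S k) / m k * t).
  { apply Rmult_le_reg_r with (/ t). apply Rinv_0_lt_compat; auto.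
    rewrite Rmult_assoc, Rinv_r, Rmult_1_r, Rmult_1_l by lra. lra. }
  replace (m (S k) * t ^ S k) with ((m (S k) / m k * t) * (m k * t ^ k)).
  2:{ simpl. field. lra. }
  assert (0 < m k * t ^ k) by nra. nra.
Qed.

Lemma argmin_fin (v : nat -> R) K : exists n, (n <= K)%nat /\ forall j, (j <= K)%nat -> v n <= v j.
Proof.
  induction K as [|K [n [Hn IH]]].
  - exists 0%nat; split; auto. intros j Hj. replace j with 0%nat by lia. lra.
  - destruct (Rle_lt_dec (v n) (v (S K))).
    + exists n; split; [lia|]. intros j Hj. destruct (Nat.eq_dec j (S K)); [subst; auto|].
      apply IH; lia.
    + exists (S K); split; [lia|]. intros j Hj. destruct (Nat.eq_dec j (S K)); [subst; lra|].
      specialize (IH j ltac:(lia)). lra.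
Qed.

Lemma GB_lemma (m : nat -> R) t K : (forall k, 0 < m k) -> 0 < t ->
  (forall k, (K <= k)%nat -> m (S k) / m k >= / t) ->
  is_glb (fun v => exists k, v = m k * t ^ k) (h_fun m t) /\
  h_fun m t = m (Gamma_bar m t) * t ^ (Gamma_bar m t) /\ (Gamma_bar m t <= K)%nat.
Proof.
  intros Hm Ht HK.
  set (v := fun k => m k * t ^ k).
  destruct (argmin_fin v K) as [n [HnK Hn]].
  assert (Htail : forall d, v K <= v (K + d)%nat).
  { induction d. rewrite Nat.add_0_r; lra.
    eapply Rle_trans. apply IHd. replace (K + S d)%nat with (S (K + d)) by lia.
    unfold v. apply ratio_step; auto. apply HK; lia. }
  assert (Hall : forall j, v n <= v j).
  { intros j. destruct (le_lt_dec j K). auto.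
    eapply Rle_trans. apply Hn. apply le_n. replace j with (K + (j - K))%nat by lia. apply Htail. }
  assert (Hglb : is_glb (fun w => exists k, w = m k * t ^ k) (v n)).
  { split. intros w [k ->]. apply Hall. intros b Hb. apply Hb. exists n. reflexivity. }
  assert (Hh : is_glb (fun w => exists k, w = m k * t ^ k) (h_fun m t)).
  { unfold h_fun. apply epsilon_spec. eauto. }
  assert (Hhv : h_fun m t = v n).
  { apply Rle_antisym. apply (proj1 Hh). exists n; reflexivity.
    apply (proj2 Hh). apply (proj1 Hglb). }
  assert (Hsp : h_fun m t = m (Gamma_bar m t) * t ^ (Gamma_bar m t) /\
     forall k, h_fun m t = m k * t ^ k -> (Gamma_bar m t <= k)%nat).
  { unfold Gamma_bar at 1 2 3. apply epsilon_spec. apply least_ex. exists n. exact Hhv. }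
  destruct Hsp as [Hs1 Hs2]. split; auto. split; auto.
  specialize (Hs2 n Hhv). lia.
Qed.

Lemma GU_le_GB (m : nat -> R) t : (forall k, 0 < m k) -> 0 < t ->
  is_glb (fun v => exists k, v = m k * t ^ k) (h_fun m t) ->
  h_fun m t = m (Gamma_bar m t) * t ^ (Gamma_bar m t) ->
  GUspec m t (Gamma_under m t) -> (Gamma_under m t <= Gamma_bar m t)%nat.
Proof.
  intros Hm Ht Hg Hh [_ Hmin].
  set (n := Gamma_bar m t) in *.
  destruct (le_lt_dec (Gamma_under m t) n) as [|Hlt]; auto. exfalso.
  assert (Hr : m (S n) / m n < / t).
  { destruct (Rlt_le_dec (m (S n) / m n) (/ t)); auto. specialize (Hmin n ltac:(lra)). lia. }
  assert (m (S n) * t ^ S n < m n * t ^ n).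
  { pose proof (Hm n). pose proof (pow_lt t n Ht).
    assert (m (S n) / m n * t < 1).
    { apply Rmult_lt_reg_r with (/ t). apply Rinv_0_lt_compat; auto.
      rewrite Rmult_assoc, Rinv_r, Rmult_1_r, Rmult_1_l by lra. lra. }
    replace (m (S n) * t ^ S n) with ((m (S n) / m n * t) * (m n * t ^ n)).
    2:{ simpl. field. lra. }
    assert (0 < m n * t ^ n) by nra. nra. }
  assert (h_fun m t <= m (S n) * t ^ S n). { apply (proj1 Hg). exists (S n); reflexivity. }
  lra.
Qed.

Lemma Pdiv_mono omega : is_weight_function omega -> forall a b j, 0 < a -> a <= b ->
  / a * phi_star omega (a * INR j) <= / b * phi_star omega (b * INR j).
Proof.
  intros Hw a b j Ha Hab. destruct j as [|j].
  - simpl. rewrite !Rmult_0_r, P0 by auto. lra.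
  - pose proof (lt_0_INR (S j) ltac:(lia)) as Hj.
    destruct (Rle_lt_or_eq_dec _ _ Hab) as [Hlt|Heq]; [|subst; lra].
    pose proof (slope1 omega Hw 0 (a * INR (S j)) (b * INR (S j)) ltac:(lra) ltac:(nra) ltac:(nra)) as H.
    rewrite P0, !Rminus_0_r in H by auto.
    replace (/ a * phi_star omega (a * INR (S j))) with
      (phi_star omega (a * INR (S j)) / (a * INR (S j)) * INR (S j)) by (field; lra).
    replace (/ b * phi_star omega (b * INR (S j))) with
      (phi_star omega (b * INR (S j)) / (b * INR (S j)) * INR (S j)) by (field; lra).
    apply Rmult_le_compat_r; lra.
Qed.

Lemma W_sub omega : is_weight_function omega -> forall a b j k, 0 < a -> 2 * a <= b ->
  W omega a (j + k) <= W omega b j * W omega b k.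
Proof.
  intros Hw a b j k Ha Hb. unfold W. rewrite <- exp_plus. apply exp_le_mono.
  pose proof (pos_INR j). pose proof (pos_INR k).
  pose proof (P_convex omega Hw (2 * a * INR j) (2 * a * INR k) (1/2) ltac:(nra) ltac:(nra) ltac:(lra)) as H1.
  replace (1 / 2 * (2 * a * INR j) + (1 - 1 / 2) * (2 * a * INR k)) with (a * INR (j + k)) in H1
    by (rewrite plus_INR; field).
  pose proof (Pdiv_mono omega Hw (2 * a) b j ltac:(lra) Hb).
  pose proof (Pdiv_mono omega Hw (2 * a) b k ltac:(lra) Hb).
  replace (2 * a * INR j) with ((2 * a) * INR j) in H1 by ring.
  assert (/ a * phi_star omega (a * INR (j + k)) <=
     / (2 * a) * phi_star omega (2 * a * INR j) + / (2 * a) * phi_star omega (2 * a * INR k)).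
  { apply Rmult_le_reg_l with a; auto.
    replace (a * (/ a * phi_star omega (a * INR (j + k)))) with (phi_star omega (a * INR (j + k))) by (field; lra).
    replace (a * (/ (2 * a) * phi_star omega (2 * a * INR j) + / (2 * a) * phi_star omega (2 * a * INR k)))
      with (1 / 2 * phi_star omega (2 * a * INR j) + (1 - 1 / 2) * phi_star omega (2 * a * INR k)) by (field; lra).
    exact H1. }
  lra.
Qed.

Lemma fact_mul j k : (Factorial.fact j * Factorial.fact k <= Factorial.fact (j + k))%nat.
Proof.
  induction k.
  - rewrite Nat.add_0_r. simpl. lia.
  - replace (j + S k)%nat with (S (j + k)) by lia. simpl Factorial.fact.
    nia.
Qed.

Lemma wseq_sub omega : is_weight_function omega -> forall a b j k, 0 < a -> 2 * a <= b ->
  wseq omega a (j + k) <= wseq omega b j * wseq omega b k.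
Proof.
  intros Hw a b j k Ha Hb. unfold wseq.
  pose proof (W_sub omega Hw a b j k Ha Hb).
  pose proof (INR_fact_lt_0 j). pose proof (INR_fact_lt_0 k).
  pose proof (le_INR _ _ (fact_mul j k)) as Hf. rewrite mult_INR in Hf.
  pose proof (W_pos omega a (j + k)). pose proof (W_pos omega b j). pose proof (W_pos omega b k).
  replace (W omega b j / INR (Factorial.fact j) * (W omega b k / INR (Factorial.fact k)))
    with ((W omega b j * W omega b k) / (INR (Factorial.fact j) * INR (Factorial.fact k))) by (field; lra).
  unfold Rdiv. apply Rle_trans with (W omega b j * W omega b k * / INR (Factorial.fact (j + k))).
  - pose proof (INR_fact_lt_0 (j + k)). apply Rmult_le_compat_r. left; apply Rinv_0_lt_compat; lra. lra.
  - apply Rmult_le_compat_l. nra. apply Rinv_le_contravar; nra.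
Qed.

Lemma A_step omega a b D s N : 0 < s -> 0 < D ->
  (forall j k : nat, (1 <= j)%nat -> (j <= k)%nat ->
     theta omega a j / INR j <= D * (theta omega b k / INR k)) ->
  GUspec (wseq omega a) s N ->
  forall k, (N <= k)%nat -> wseq omega b (S k) / wseq omega b k >= / (D * s).
Proof.
  intros Hs HD Hg [HN _] k Hk. rewrite wseq_ratio in *.
  specialize (Hg (S N) (S k) ltac:(lia) ltac:(lia)).
  apply Rle_ge. rewrite Rinv_mult.
  apply Rmult_le_reg_l with D; auto. rewrite <- Rmult_assoc, Rinv_r, Rmult_1_l by lra. lra.
Qed.

Lemma good_up omega : is_weight_function omega -> forall a g C y D, 0 < a -> 0 < g -> g <= y ->
  1 <= C -> C <= D ->
  (forall j k : nat, (1 <= j)%nat -> (j <= k)%nat ->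
     theta omega a j / INR j <= C * (theta omega g k / INR k)) ->
  (forall j k : nat, (1 <= j)%nat -> (j <= k)%nat ->
     theta omega a j / INR j <= D * (theta omega y k / INR k)).
Proof.
  intros Hw a g C y D Ha Hg Hgy HC HCD H j k Hj Hjk.
  apply Rle_trans with (C * (theta omega g k / INR k)). apply H; auto.
  assert (Hk : (1 <= k)%nat) by lia. pose proof (INR_ge1 _ Hk).
  assert (theta omega g k <= theta omega y k).
  { apply theta_mono; auto; try lra; nra. }
  pose proof (theta_pos omega g k).
  assert (theta omega g k / INR k <= theta omega y k / INR k).
  { apply Rmult_le_compat_r. left; apply Rinv_0_lt_compat; lra. auto. }
  assert (0 < theta omega g k / INR k) by (apply Rdiv_lt_0_compat; lra).
  apply Rle_trans with (D * (theta omega g k / INR k)).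
  apply Rmult_le_compat_r; lra. apply Rmult_le_compat_l; lra.
Qed.

Lemma halve N : exists k, (2 * k <= N /\ N <= 2 * k + 1)%nat.
Proof. destruct (Nat.Even_or_Odd N) as [[k Hk]|[k Hk]]; exists k; lia. Qed.

Lemma half_step omega : is_weight_function omega -> forall x D N k, 0 < x ->
  1 <= D -> theta omega x 2 / 2 / theta omega (4 * x) 1 <= D ->
  (2 * k <= N)%nat -> (N <= 2 * k + 1)%nat ->
  theta omega x (S N) / INR (S N) <= D * (theta omega (4 * x) (S k) / INR (S k)).
Proof.
  intros Hw x D N k Hx HD HD2 Hk1 Hk2.
  pose proof (theta_pos omega (4 * x) (S k)).
  pose proof (theta_pos omega (4 * x) 1).
  pose proof (theta_pos omega x (S N)).
  destruct (classic (k = 0%nat /\ N = 1%nat)) as [[-> ->]|Hne].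
  - simpl INR. replace (1 + 1) with 2 by ring.
    apply Rmult_le_compat_r with (r := theta omega (4 * x) 1) in HD2; [|lra].
    unfold Rdiv in *. rewrite Rmult_assoc, Rinv_l, Rmult_1_r in HD2 by lra.
    replace (1 / 1) with 1 by field. rewrite Rinv_1. nra.
  - assert (HN : (S N <= 4 * k + 1)%nat) by lia.
    apply le_INR in HN. rewrite plus_INR, mult_INR in HN. simpl (INR 4) in HN. simpl (INR 1) in HN.
    assert (HN2 : (S N <= 2 * S k)%nat) by lia.
    apply le_INR in HN2. rewrite mult_INR in HN2. simpl (INR 2) in HN2.
    assert (HN3 : (S k <= S N)%nat) by lia. apply le_INR in HN3.
    rewrite !S_INR in *. pose proof (pos_INR k). pose proof (pos_INR N).
    assert (theta omega x (S N) <= theta omega (4 * x) (S k)).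
    { apply theta_mono; auto; try lra; try lia; rewrite !S_INR; nra. }
    apply Rle_trans with (theta omega (4 * x) (S k) / (INR k + 1)).
    + unfold Rdiv. apply Rle_trans with (theta omega (4 * x) (S k) * / (INR N + 1)).
      apply Rmult_le_compat_r; [left; apply Rinv_0_lt_compat; lra | lra].
      apply Rmult_le_compat_l; [lra|]. apply Rinv_le_contravar; lra.
    + assert (0 < theta omega (4 * x) (S k) / (INR k + 1)) by (apply Rdiv_lt_0_compat; lra).
      nra.
Qed.

Theorem proposition3p7 (omega : R -> R)
  (Hw : is_weight_function omega)
  (Hgood : is_good omega)
  (Hlittle : forall eps, 0 < eps -> exists T, forall t, T <= t -> omega t <= eps * t) :
  forall x, 0 < x ->
  exists y1 y2 y3 D,
    x <= y1 /\ y1 <= y2 /\ y2 <= y3 /\ 1 <= D /\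
    2 * x <= y1 /\ 2 * y1 <= y2 /\
    (forall t, 0 < t ->
       INR (Gamma_bar (wseq omega y3) (D ^ 3 * t))
         <= INR (Gamma_under (wseq omega y2) (D ^ 2 * t)) /\
       INR (Gamma_under (wseq omega y2) (D ^ 2 * t))
         <= INR (Gamma_bar (wseq omega y2) (D ^ 2 * t)) /\
       INR (Gamma_bar (wseq omega y2) (D ^ 2 * t))
         <= INR (Gamma_under (wseq omega y1) (D * t)) /\
       INR (Gamma_under (wseq omega y1) (D * t))
         <= INR (Gamma_under (wseq omega x) t) / 2) /\
    (forall j k : nat,
       wseq omega x (j + k) <= wseq omega y1 j * wseq omega y1 k) /\
    (forall j k : nat,
       wseq omega y1 (j + k) <= wseq omega y2 j * wseq omega y2 k).
Proof.
  intros x Hx.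
  destruct (Hgood (4 * x) ltac:(lra)) as [g1 [Hg1 [C1 [HC1 Hgd1]]]].
  set (y1 := 4 * x).
  set (y2 := Rmax (2 * y1) g1).
  destruct (Hgood y2) as [g2 [Hg2 [C2 [HC2 Hgd2]]]].
  { unfold y2, y1. pose proof (Rmax_l (2 * (4 * x)) g1). lra. }
  set (y3 := Rmax y2 g2).
  set (D := Rmax (Rmax C1 C2) (Rmax 1 (theta omega x 2 / 2 / theta omega y1 1))).
  assert (Hy1 : 0 < y1) by (unfold y1; lra).
  assert (Hy12 : 2 * y1 <= y2) by apply Rmax_l.
  assert (Hy23 : y2 <= y3) by apply Rmax_l.
  assert (HDC1 : C1 <= D).
  { unfold D. eapply Rle_trans; [apply Rmax_l|apply Rmax_l]. }
  assert (HDC2 : C2 <= D).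
  { unfold D. eapply Rle_trans; [apply Rmax_r|apply Rmax_l]. }
  assert (HD1 : 1 <= D).
  { unfold D. eapply Rle_trans; [apply Rmax_l|apply Rmax_r]. }
  assert (HD2 : theta omega x 2 / 2 / theta omega (4 * x) 1 <= D).
  { unfold D. eapply Rle_trans; [apply Rmax_r|apply Rmax_r]. }
  assert (G12 := good_up omega Hw y1 g1 C1 y2 D Hy1 Hg1 (Rmax_r _ _) HC1 HDC1 Hgd1).
  assert (G23 := good_up omega Hw y2 g2 C2 y3 D ltac:(lra) Hg2 (Rmax_r _ _) HC2 HDC2 Hgd2).
  exists y1, y2, y3, D.
  split; [unfold y1; lra|]. split; [lra|]. split; [lra|]. split; [lra|].
  split; [unfold y1; lra|]. split; [lra|].
  split; [|split; intros j k; apply wseq_sub; auto; unfold y1; lra].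
  intros t Ht.
  assert (HDt : 0 < D * t) by nra.
  assert (HDDt : 0 < D * (D * t)) by nra.
  assert (HDDDt : 0 < D * (D * (D * t))) by nra.
  replace (D ^ 3 * t) with (D * (D * (D * t))) by ring.
  replace (D ^ 2 * t) with (D * (D * t)) by ring.
  assert (HNx : GUspec (wseq omega x) t (Gamma_under (wseq omega x) t)).
  { apply GU_spec.
    destruct (unbounded omega Hw Hlittle x (/ t) Hx ltac:(apply Rinv_0_lt_compat; lra))
      as [k [Hk Hm]].
    destruct k as [|k]; [lia|]. exists k. rewrite wseq_ratio. lra. }
  set (Nx := Gamma_under (wseq omega x) t) in *.
  destruct (halve Nx) as [k [Hk1 Hk2]].
  pose proof (half_step omega Hw x D Nx k Hx HD1 HD2 Hk1 Hk2) as Hh.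
  fold y1 in Hh.
  assert (Hk : wseq omega y1 (S k) / wseq omega y1 k >= / (D * t)).
  { rewrite wseq_ratio. destruct HNx as [HNx _]. rewrite wseq_ratio in HNx.
    apply Rle_ge. rewrite Rinv_mult.
    apply Rmult_le_reg_l with D; [lra|]. rewrite <- Rmult_assoc, Rinv_r, Rmult_1_l by lra. lra. }
  assert (HN1 : GUspec (wseq omega y1) (D * t) (Gamma_under (wseq omega y1) (D * t))).
  { apply GU_spec. eauto. }
  set (N1 := Gamma_under (wseq omega y1) (D * t)) in *.
  assert (HN1k : (N1 <= k)%nat) by (apply (proj2 HN1); auto).
  pose proof (A_step omega y1 y2 D (D * t) N1 HDt ltac:(lra) G12 HN1) as HA2.
  destruct (GB_lemma (wseq omega y2) (D * (D * t)) N1 (wseq_pos omega y2) HDDt HA2)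
    as [Hglb2 [Hh2 HB2]].
  assert (HN2 : GUspec (wseq omega y2) (D * (D * t)) (Gamma_under (wseq omega y2) (D * (D * t)))).
  { apply GU_spec. exists N1. apply HA2. lia. }
  pose proof (GU_le_GB (wseq omega y2) (D * (D * t)) (wseq_pos omega y2) HDDt Hglb2 Hh2 HN2) as HUB2.
  set (N2 := Gamma_under (wseq omega y2) (D * (D * t))) in *.
  pose proof (A_step omega y2 y3 D (D * (D * t)) N2 HDDt ltac:(lra) G23 HN2) as HA3.
  destruct (GB_lemma (wseq omega y3) (D * (D * (D * t))) N2 (wseq_pos omega y3) HDDDt HA3)
    as [_ [_ HB3]].
  split; [apply le_INR; auto|].
  split; [apply le_INR; auto|].
  split; [apply le_INR; auto|].
  apply le_INR in HN1k. apply le_INR in Hk1. rewrite mult_INR in Hk1. simpl (INR 2) in Hk1.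
  lra.
Qed.
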